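(* There is an absolute constant $C$ such that for all positive integers $n$, $$s(n)\le 2^{2n+C}\sum_{a,b,c\in[n]}2^{-|c-(a+b)|}\,g(c-(a+b)-1).$$
   Context: $[n]=\{1,\dots,n\}$, $[n]_0=\{0,1,\dots,n\}$. $s(n)$ is the number of sum-free subsets (no $a,b,c$, not necessarily distinct, with $a+b=c$, coordinatewise addition) of $\{1,3,4\}\times[n]\subset\mathbb{Z}^2$. The function $g:\mathbb{Z}\to\mathbb{R}$ is defined for positive integers $m$ by $$g(m)=\sum 2^{-|(S_1+S_2)\cap[m]_0|},$$ the sum over all pairs of sets $S_1,S_2\subseteq[m]_0$ with $0\in S_1$, $0\in S_2$ and $m+1\notin S_1+S_2$ (where $S_1+S_2=\{u+v:u\in S_1,v\in S_2\}$), and $g(m)=1$ for integers $m\le0$. *)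

(* Defs.v *)
From HB Require Import structures.
From mathcomp Require Import all_boot all_order all_algebra.
Set Implicit Arguments. Unset Strict Implicit. Unset Printing Implicit Defensive.
Import Order.TTheory GRing.Theory Num.Theory.

Definition xcoord (i : 'I_3) : nat :=
  match val i with 0 => 1 | 1 => 3 | _ => 4 end.

(* The point of {1,3,4} x [n] encoded by (i, j) : 'I_3 * 'I_n is
   (xcoord i, j + 1). *)
Definition grid_pt (n : nat) (p : 'I_3 * 'I_n) : nat * nat :=
  (xcoord p.1, (val p.2).+1).

Definition sum_free (n : nat) (A : {set 'I_3 * 'I_n}) : bool :=
  [forall a in A, forall b in A, forall c in A,
     ((grid_pt a).1 + (grid_pt b).1 != (grid_pt c).1)
     || ((grid_pt a).2 + (grid_pt b).2 != (grid_pt c).2)].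

Definition s (n : nat) : nat := #|[set A : {set 'I_3 * 'I_n} | sum_free A]|.

Definition in_sumset (m : nat) (S1 S2 : {set 'I_m.+1}) (k : nat) : bool :=
  [exists u in S1, exists v in S2, (val u + val v == k)%N].

Definition g_pos (m : nat) : rat :=
  \sum_(S1 : {set 'I_m.+1})
   \sum_(S2 : {set 'I_m.+1} | (ord0 \in S1) && (ord0 \in S2) &&
                              ~~ in_sumset S1 S2 m.+1)
     ((2%:R : rat) ^- #|[set k : 'I_m.+1 | in_sumset S1 S2 (val k)]|)%R.

Definition g (m : int) : rat :=
  if (m <= 0)%R then 1%R else g_pos (absz m).

Definition term (a b c : nat) : rat :=
  let k : int := (c%:Z - (a + b)%:Z)%R in
  ((2%:R : rat) ^- absz k * g (k - 1))%R.

(* Main.v *)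
Require Import Defs.
From mathcomp Require Import all_boot all_order all_algebra.
From mathcomp Require Import zify lra.
Set Implicit Arguments. Unset Strict Implicit. Unset Printing Implicit Defensive.
Import Order.TTheory GRing.Theory Num.Theory.
Local Open Scope ring_scope.

Lemma sum_sub (X : finType) (P Q : pred X) (f : X -> rat) :
  (forall x, P x -> Q x) -> (forall x, Q x -> 0 <= f x) ->
  \sum_(x | P x) f x <= \sum_(x | Q x) f x.
Proof.
move=> PQ f0; rewrite [X in _ <= X](bigID P) /=.
rewrite (eq_bigl P); last by move=> x; apply/andP/idP => [[]//|Px]; split => //; apply: PQ.
by rewrite lerDl sumr_ge0 // => x /andP[/f0].
Qed.

Lemma cover_bound (X J : finType) (P : pred X) (Q : J -> pred X) (f : X -> rat) :
  (forall x, P x -> exists j, Q j x) -> (forall x, P x -> 0 <= f x) ->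
  \sum_(x | P x) f x <= \sum_j \sum_(x | P x && Q j x) f x.
Proof.
move=> cov f0.
rewrite (eq_bigr (fun j => \sum_(x | P x) if Q j x then f x else 0)); last first.
  by move=> j _; rewrite big_mkcondr.
rewrite exchange_big /=.
apply: ler_sum => x Px.
have [j Qj] := cov x Px.
rewrite (bigD1 j) //= Qj /= lerDl sumr_ge0 // => i _.
by case: (Q i x) => //; apply: f0.
Qed.

Lemma inj_count (X Y : finType) (A : {set X}) (psi : X -> Y) (B : {set Y}) :
  {in A &, injective psi} -> (forall x, x \in A -> psi x \in B) -> (#|A| <= #|B|)%N.
Proof.
move=> inj AB; rewrite -(card_in_imset inj); apply: subset_leq_card.
by apply/subsetP => _ /imsetP[x xA ->]; apply: AB.
Qed.

Lemma fiber_sum (X Y : finType) (P : pred X) (Q : pred Y) (phi : X -> Y)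
  (f : X -> rat) (h : Y -> rat) (M : Y -> rat) :
  (forall x, P x -> Q (phi x)) -> (forall x, P x -> f x <= h (phi x)) ->
  (forall y, Q y -> 0 <= h y) ->
  (forall y, Q y -> (#|[set x | P x & phi x == y]|)%:R <= M y) ->
  \sum_(x | P x) f x <= \sum_(y | Q y) h y * M y.
Proof.
move=> PQ fh h0 cnt.
apply: le_trans (_ : \sum_(x | P x) h (phi x) <= _); first exact: ler_sum.
rewrite (partition_big phi Q) //=.
apply: ler_sum => y Qy.
rewrite (eq_bigr (fun _ => h y)); last by move=> x /andP[_ /eqP ->].
have -> : \sum_(i | P i && (phi i == y)) h y = \sum_(i in [set x | P x & phi x == y]) h y.
  by apply: eq_bigl => x; rewrite inE.
by rewrite sumr_const -mulr_natr ler_wpM2l // ?h0 // cnt.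
Qed.

Lemma sum_le_card (X : finType) (P : pred X) (f : X -> rat) (B : rat) :
  (forall x, P x -> f x <= B) ->
  \sum_(x | P x) f x <= (#|[set x | P x]|)%:R * B.
Proof.
move=> fB; apply: le_trans (_ : \sum_(x | P x) B <= _); first exact: ler_sum.
have -> : \sum_(x | P x) B = \sum_(x in [set x | P x]) B by apply: eq_bigl => x; rewrite inE.
by rewrite sumr_const mulr_natl.
Qed.

Lemma pow2_le (e1 e2 f1 f2 : nat) :
  (e1 + f2 <= f1 + e2)%N -> (2%:R : rat) ^+ e1 / 2%:R ^+ e2 <= 2%:R ^+ f1 / 2%:R ^+ f2.
Proof.
move=> H.
have p : forall k, (0 : rat) < 2%:R ^+ k by move=> k; rewrite exprn_gt0.
rewrite ler_pdivrMr // mulrAC ler_pdivlMr // -!exprD.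
by rewrite ler_eXn2l // ?ltr1n // addnC.
Qed.

Lemma card_gt (n k : nat) : #|[set w : 'I_n | (k < w)%N]| = (n - k.+1)%N.
Proof.
rewrite cardE /enum_mem -enumT /= size_filter.
have -> : count (mem [set w : 'I_n | (k < w)%N]) (enum 'I_n)
   = count (fun w => k < w)%N (map val (enum 'I_n)).
  by rewrite count_map; apply: eq_count => w; rewrite !inE.
rewrite val_enum_ord.
elim: n => [|n IH] //; rewrite -[n.+1]addn1 iotaD count_cat IH /= addn0 add0n.
case: (ltnP k n) => H; lia.
Qed.

Definition F n (A1 A3 : {set 'I_n}) : {set 'I_n} :=
  [set w : 'I_n | [exists u in A1, exists v in A3, (val u + val v).+1 == val w]].
Definition W n (x : {set 'I_n} * {set 'I_n}) : rat := 2%:R ^+ (n - #|F x.1 x.2|).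
Definition i0 : 'I_3 := @Ordinal 3 0 isT.
Definition i1 : 'I_3 := @Ordinal 3 1 isT.
Definition i2 : 'I_3 := @Ordinal 3 2 isT.
Definition proj n (i : 'I_3) (A : {set 'I_3 * 'I_n}) : {set 'I_n} := [set j | (i, j) \in A].

Lemma W_ge0 n x : 0 <= @W n x.
Proof. by rewrite /W exprn_ge0. Qed.

Lemma s_le n : ((s n)%:R : rat) <= \sum_(x : {set 'I_n} * {set 'I_n}) W x.
Proof.
have -> : ((s n)%:R : rat) = \sum_(A : {set 'I_3 * 'I_n} | sum_free A) 1.
  rewrite /s -sumr_const; apply: eq_bigl => A; by rewrite inE.
apply: le_trans (fiber_sum (Q := predT) (phi := fun A => (proj i0 A, proj i1 A))
   (h := fun _ => 1) (M := @W n) _ _ _ _) _.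
- by [].
- by [].
- by [].
- move=> [A1 A3] _.
  rewrite /W /= -natrX ler_nat.
  have E : (n - #|F A1 A3|)%N = #|~: F A1 A3| by have := cardsC (F A1 A3); rewrite card_ord; lia.
  rewrite E.
  rewrite -card_powerset.
  apply: (inj_count (psi := proj i2)).
  + move=> A A'; rewrite !inE => /andP[_ /eqP [e0 e1]] /andP[_ /eqP [e0' e1']] e2.
    apply/setP => -[i j].
    have: (i, j) \in A = (j \in proj i A) by rewrite inE.
    have: (i, j) \in A' = (j \in proj i A') by rewrite inE.
    move=> -> ->.
    case: i => -[|[|[|k]]] Hi //.
    * by rewrite (_ : Ordinal Hi = i0) ?e0 ?e0' //; apply: val_inj.
    * by rewrite (_ : Ordinal Hi = i1) ?e1 ?e1' //; apply: val_inj.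
    * by rewrite (_ : Ordinal Hi = i2) ?e2 //; apply: val_inj.
  + move=> A; rewrite !inE => /andP[sf /eqP [e0 e1]].
    apply/subsetP => w; rewrite !inE => Aw.
    apply/negP => /existsP[u /andP[uA /existsP[v /andP[vA /eqP e]]]].
    rewrite -e0 inE in uA; rewrite -e1 inE in vA.
    move/forall_inP/(_ _ uA)/forall_inP/(_ _ vA)/forall_inP/(_ _ Aw): sf.
    by rewrite /grid_pt /xcoord /= -e addnS addSn !eqxx.
- by apply: ler_sum => x _; rewrite mul1r.
Qed.

Definition Xab n (a0 b0 : 'I_n) (x : {set 'I_n} * {set 'I_n}) : bool :=
  [&& a0 \in x.1, [forall u in x.1, (a0 <= u)%N], b0 \in x.2 &
      [forall v in x.2, (b0 <= v)%N]].
Definition full n (a0 b0 : 'I_n) (x : {set 'I_n} * {set 'I_n}) : bool :=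
  [forall w : 'I_n, (a0 + b0 + 1 <= w)%N ==> (w \in F x.1 x.2)].
Definition key n (a0 b0 c0 : 'I_n) (x : {set 'I_n} * {set 'I_n}) : bool :=
  [&& (a0 + b0 + 1 <= c0)%N, c0 \notin F x.1 x.2 &
      [forall w : 'I_n, (c0 < w)%N ==> (w \in F x.1 x.2)]].
Definition R n (k : nat) : {set 'I_n} := [set w : 'I_n | (k < w)%N].

Lemma g_ge0 m : 0 <= g m.
Proof.
rewrite /g; case: ifP => // _; rewrite /g_pos.
by apply: sumr_ge0 => S1 _; apply: sumr_ge0 => S2 _; rewrite invr_ge0 exprn_ge0.
Qed.

Lemma term_ge0 a b c : 0 <= term a b c.
Proof. by rewrite /term mulr_ge0 ?g_ge0 // invr_ge0 exprn_ge0. Qed.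

Lemma term_nonpos a b c : (c <= a + b)%N -> term a b c = 2%:R ^- (a + b - c).
Proof.
move=> H; rewrite /term.
have -> : (c%:Z - (a + b)%:Z)%R = - ((a + b - c)%N%:Z) by rewrite -subzn // opprB.
rewrite abszN absz_nat /g ifT ?mulr1 //.
rewrite lerBlDr add0r; apply: le_trans (_ : 0 <= 1) => //.
by rewrite oppr_le0.
Qed.

Lemma term_pos a b m : term a b (a + b + m.+1) = 2%:R ^- m.+1 * g m.
Proof.
rewrite /term.
have -> : ((a + b + m.+1)%N%:Z - (a + b)%:Z)%R = m.+1%:Z.
  by rewrite PoszD addrAC subrr add0r.
by rewrite absz_nat (_ : (m.+1%:Z - 1 = m%:Z)%R) // intS addrAC subrr add0r.
Qed.

Lemma restrict_eq n (a t : nat) (A A' : {set 'I_n}) :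
  (forall u : 'I_n, u \in A -> (a <= u)%N) -> (forall u : 'I_n, u \in A' -> (a <= u)%N) ->
  (forall w : 'I_n, (a <= w <= t)%N -> (w \in A) = (w \in A')) ->
  A :&: R n t = A' :&: R n t -> A = A'.
Proof.
move=> HA HA' mid hi; apply/setP => w.
case: (ltnP t w) => tw.
  by move/setP: hi => /(_ w); rewrite !inE tw !andbT.
case: (ltnP w a) => aw.
  apply/idP/idP => [/HA|/HA']; by rewrite leqNgt aw.
by apply: mid; rewrite aw tw.
Qed.

Lemma natr2X (k : nat) : ((2 ^ k)%N%:R : rat) = 2%:R ^+ k.
Proof. by rewrite natrX. Qed.

Lemma card_R n k : #|R n k| = (n - k.+1)%N.
Proof. exact: card_gt. Qed.

Lemma full_bound n (a0 b0 c0 : 'I_n) : val c0 = minn (a0 + b0 + 1) n.-1 ->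
  \sum_(x | Xab a0 b0 x && full a0 b0 x) W x <=
  2%:R * 2%:R ^+ (2 * n) * term a0.+1 b0.+1 c0.+1.
Proof.
move=> hc.
set s0 := (a0 + b0 + 1)%N.
apply: le_trans (sum_le_card (B := 2%:R ^+ (n - (n - s0))) _) _.
  move=> x /andP[_ fx]; rewrite /W ler_eXn2l ?ltr1n //.
  apply: leq_sub2l.
  have -> : (n - s0 = #|R n (a0 + b0)|)%N by rewrite card_R /s0 addn1.
  apply: subset_leq_card; apply/subsetP => w; rewrite inE => hw.
  by move/forallP/(_ w): fx; rewrite /s0 addn1 hw.
have Hc : (#|[set x | Xab a0 b0 x && full a0 b0 x]| <= 2 ^ (n - a0.+1) * 2 ^ (n - b0.+1))%N.
  rewrite -!card_R -!card_powerset -cardsX.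
  apply: (inj_count (psi := fun x => (x.1 :&: R n a0, x.2 :&: R n b0))).
    move=> [A1 A3] [A1' A3']; rewrite !inE /Xab /=.
    move=> /andP[/and4P[a1 /forall_inP h1 b1 /forall_inP h3] _].
    move=> /andP[/and4P[a1' /forall_inP h1' b1' /forall_inP h3'] _] [e1 e3].
    congr pair.
      apply: (restrict_eq h1 h1') e1 => w /andP[p q].
      by rewrite (_ : w = a0) ?a1 ?a1' //; apply: val_inj; apply/eqP; rewrite eqn_leq p q.
    apply: (restrict_eq h3 h3') e3 => w /andP[p q].
    by rewrite (_ : w = b0) ?b1 ?b1' //; apply: val_inj; apply/eqP; rewrite eqn_leq p q.
  by move=> x _; rewrite !inE !subsetIr.
apply: le_trans (_ : (2 ^ (n - a0.+1) * 2 ^ (n - b0.+1))%N%:R * 2%:R ^+ (n - (n - s0)) <= _).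
  by rewrite ler_wpM2r ?exprn_ge0 // ler_nat.
rewrite natrM !natr2X -!exprD.
have lt0 : (c0 <= a0.+1 + b0.+1)%N by rewrite hc; apply: leq_trans (geq_minl _ _) _; rewrite /s0; lia.
rewrite term_nonpos //.
have P := @pow2_le (n - a0.+1 + (n - b0.+1) + (n - (n - s0))) 0 (2*n).+1 (a0.+1 + b0.+1 - c0.+1).
rewrite expr0 divr1 exprS in P; apply: P.
have := ltn_ord a0; have := ltn_ord b0; have := ltn_ord c0; move: hc; rewrite /s0.
move=> hc2; have hc3 : nat_of_ord c0 = minn (a0 + b0 + 1) n.-1 by exact: hc2. lia.
by rewrite hc; apply: leq_ltn_trans (geq_minl _ _) _; lia.
Qed.

Definition nmemb n (A : {set 'I_n}) (k : nat) : bool := [exists w in A, nat_of_ord w == k].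
Definition Sh n m (a : nat) (A : {set 'I_n}) : {set 'I_m.+1} :=
  [set i : 'I_m.+1 | nmemb A (a + i)].
Definition Qm m (y : {set 'I_m.+1} * {set 'I_m.+1}) : bool :=
  [&& ord0 \in y.1, ord0 \in y.2 & ~~ in_sumset y.1 y.2 m.+1].
Definition Pw m (y : {set 'I_m.+1} * {set 'I_m.+1}) : rat :=
  2%:R ^- #|[set k : 'I_m.+1 | in_sumset y.1 y.2 k]|.

Lemma nmembE n (A : {set 'I_n}) (w : 'I_n) : nmemb A (val w) = (w \in A).
Proof.
apply/existsP/idP => [[w' /andP[h /eqP e]]|h]; last by exists w; rewrite h eqxx.
by rewrite (_ : w = w') //; apply: val_inj.
Qed.

Lemma Pw_ge0 m y : 0 <= @Pw m y.
Proof. by rewrite /Pw invr_ge0 exprn_ge0. Qed.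

Lemma Pw_le1 m y : @Pw m y <= 1.
Proof. by rewrite /Pw invf_le1 ?exprn_gt0 // exprn_ege1 // ler1n. Qed.

Lemma hsum_le m : \sum_(y | Qm y) @Pw m y <= 4%:R * g m%:Z.
Proof.
case: m => [|m].
  rewrite /g /= mulr1.
  apply: le_trans (sum_le_card (B := 1) (fun y (_ : Qm y) => @Pw_le1 0 y)) _.
  rewrite mulr1 ler_nat.
  apply: leq_trans (_ : #|setX (powerset [set: 'I_1]) (powerset [set: 'I_1])| <= 4)%N.
    by apply: subset_leq_card; apply/subsetP => y _; rewrite !inE !subsetT.
  by rewrite cardsX card_powerset cardsT card_ord.
rewrite /g /= /g_pos pair_big_dep /=.
rewrite [X in _ <= _ * X](eq_bigl (fun y : {set 'I_m.+2} * {set 'I_m.+2} => Qm y)); last first.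
  by move=> y; rewrite /Qm andbA.
apply: ler_peMl; last by rewrite ler1n.
by apply: sumr_ge0 => y _; exact: Pw_ge0.
Qed.

Lemma ShE n m a (A : {set 'I_n}) (i : 'I_m.+1) : (i \in Sh m a A) = nmemb A (a + i).
Proof. by rewrite inE. Qed.

Lemma key_bound n (a0 b0 c0 : 'I_n) :
  \sum_(x | Xab a0 b0 x && ~~ full a0 b0 x && key a0 b0 c0 x) W x <=
  16%:R * 2%:R ^+ (2 * n) * term a0.+1 b0.+1 c0.+1.
Proof.
case: (ltnP (a0 + b0 + 1) c0) => hlt; last first.
  rewrite big_pred0; first by apply: mulr_ge0; [apply: mulr_ge0 => //; apply: exprn_ge0 | apply: term_ge0].
  move=> x; apply/negP => /andP[/andP[/and4P[a1 _ b1 _] _] /and3P[h1 h2 _]].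
  move/negP: h2; apply; rewrite inE; apply/existsP; exists a0; rewrite a1 /=.
  apply/existsP; exists b0; rewrite b1 /=; apply/eqP; lia.
set m := (c0 - (a0 + b0 + 2))%N.
have ec : nat_of_ord c0 = (a0 + b0 + 2 + m)%N by rewrite /m; lia.
have hcn := ltn_ord c0.
apply: le_trans (fiber_sum (Q := @Qm m)
   (phi := fun x => (Sh m a0 x.1, Sh m b0 x.2))
   (h := fun y => 2%:R ^+ c0.+1 * Pw y)
   (M := fun _ => 2%:R ^+ (n - (a0 + m).+1 + (n - (b0 + m).+1))) _ _ _ _) _.
- move=> [A1 A3] /andP[/andP[/and4P[a1 _ b1 _] _] /and3P[_ h2 _]] /=.
  rewrite /Qm /= !ShE /= !addn0 !nmembE a1 b1 /=.
  apply/negP => /existsP[u /andP[uS /existsP[v /andP[vS /eqP e]]]].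
  rewrite ShE in uS; rewrite ShE in vS.
  case/existsP: uS => w1 /andP[w1A /eqP e1].
  case/existsP: vS => w2 /andP[w2A /eqP e2].
  move/negP: h2; apply; rewrite inE; apply/existsP; exists w1; rewrite w1A /=.
  apply/existsP; exists w2; rewrite w2A /=; apply/eqP.
  change (val u + val v)%N with (nat_of_ord u + nat_of_ord v)%N in e; lia.
- move=> [A1 A3] /andP[/andP[/and4P[a1 _ b1 _] _] /and3P[_ h2 h3]] /=.
  set y := (Sh m a0 A1, Sh m b0 A3).
  set P := [set k : 'I_m.+1 | in_sumset y.1 y.2 k].
  pose f (k : 'I_m.+1) : 'I_n := insubd c0 (a0 + b0 + 1 + k)%N.
  have fv : forall k : 'I_m.+1, nat_of_ord (f k) = (a0 + b0 + 1 + k)%N.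
    move=> k; rewrite /f val_insubd; have := ltn_ord k; case: ifP => // /negP; lia.
  have finj : injective f by move=> k k' e; apply: ord_inj; move: (fv k) (fv k'); rewrite e; lia.
  have cU : (#|R n c0| + #|P| <= #|F A1 A3|)%N.
    rewrite -(card_imset P finj).
    have dis : R n c0 :&: (f @: P) = set0.
      apply/setP => w; rewrite !inE; apply/negP => /andP[hw /imsetP[k _ ek]].
      move: hw; rewrite ek fv; have := ltn_ord k; lia.
    rewrite -cardsUI dis cards0 addn0.
    apply: subset_leq_card; apply/subsetP => w; rewrite in_setU => /orP[hw|/imsetP[k kP ->]].
      by rewrite inE in hw; move/forallP/(_ w): h3; rewrite hw.
    rewrite inE in kP; case/existsP: kP => u /andP[uS /existsP[v /andP[vS /eqP e]]].
    rewrite ShE in uS; rewrite ShE in vS.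
    case/existsP: uS => w1 /andP[w1A /eqP e1].
    case/existsP: vS => w2 /andP[w2A /eqP e2].
    rewrite inE; apply/existsP; exists w1; rewrite w1A /=.
    apply/existsP; exists w2; rewrite w2A /= fv; apply/eqP.
    change (val u + val v)%N with (nat_of_ord u + nat_of_ord v)%N in e.
    change (val k) with (nat_of_ord k) in e; lia.
  rewrite card_R in cU.
  rewrite /W /Pw /=.
  have PP := @pow2_le (n - #|F A1 A3|) 0 c0.+1 #|P|.
  rewrite expr0 divr1 in PP; apply: PP.
  have := max_card (F A1 A3); rewrite card_ord; lia.
- by move=> y _; rewrite mulr_ge0 ?exprn_ge0 ?Pw_ge0.
- move=> y _; rewrite -natr2X ler_nat expnD -!card_R -!card_powerset -cardsX.
  apply: (inj_count (psi := fun x => (x.1 :&: R n (a0 + m), x.2 :&: R n (b0 + m)))).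
    move=> [A1 A3] [A1' A3']; rewrite !inE /Xab /=.
    move=> /andP[/andP[/andP[/and4P[a1 /forall_inP h1 b1 /forall_inP h3] _] _] /eqP ey].
    move=> /andP[/andP[/andP[/and4P[a1' /forall_inP h1' b1' /forall_inP h3'] _] _] /eqP ey'].
    move=> [e1 e3]; rewrite -ey' in ey; case: ey => s1 s3.
    congr pair.
      apply: (restrict_eq h1 h1') e1 => w /andP[p q].
      have hi : (w - a0 < m.+1)%N by lia.
      move/setP: s1 => /(_ (Ordinal hi)); rewrite !ShE /= (_ : (a0 + (w - a0))%N = w) ?nmembE //.
      lia.
    apply: (restrict_eq h3 h3') e3 => w /andP[p q].
    have hi : (w - b0 < m.+1)%N by lia.
    move/setP: s3 => /(_ (Ordinal hi)); rewrite !ShE /= (_ : (b0 + (w - b0))%N = w) ?nmembE //.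
    lia.
  by move=> x _; rewrite !inE !subsetIr.
set E := (n - (a0 + m).+1 + (n - (b0 + m).+1))%N.
rewrite (eq_bigr (fun y => (2%:R ^+ c0.+1 * 2%:R ^+ E) * Pw y)); last by move=> y _; rewrite mulrAC.
rewrite -mulr_sumr.
have -> : c0.+1 = (a0.+1 + b0.+1 + m.+1)%N by rewrite ec; lia.
rewrite term_pos.
apply: le_trans (ler_wpM2l _ (hsum_le m)) _; first by rewrite mulr_ge0 ?exprn_ge0.
rewrite mulrA [X in _ <= X]mulrA ler_wpM2r ?g_ge0 //.
have PP := @pow2_le ((a0.+1 + b0.+1 + m.+1) + E + 2) 0 (4 + 2 * n) m.+1.
rewrite expr0 divr1 in PP.
rewrite (_ : (4%:R : rat) = 2%:R ^+ 2); last by rewrite -natrX.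
rewrite (_ : (16%:R : rat) = 2%:R ^+ 4); last by rewrite -natrX.
rewrite -!exprD.
apply: PP.
rewrite /E; have := ltn_ord c0; lia.
Qed.

Lemma ab_bound n (a0 b0 : 'I_n) :
  \sum_(x | Xab a0 b0 x) W x <=
  32%:R * 2%:R ^+ (2 * n) * \sum_(c0 : 'I_n) term a0.+1 b0.+1 c0.+1.
Proof.
have hn : (minn (a0 + b0 + 1) n.-1 < n)%N.
  by apply: leq_ltn_trans (geq_minr _ _) _; have := ltn_ord a0; lia.
set T := \sum_(c0 : 'I_n) _.
have T0 : forall c : 'I_n, term a0.+1 b0.+1 c.+1 <= T.
  move=> c; rewrite /T (bigD1 c) //= lerDl; apply: sumr_ge0 => i _; exact: term_ge0.
rewrite (bigID (full a0 b0)) /=.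
have K : 0 <= 2%:R ^+ (2 * n) :> rat by apply: exprn_ge0.
apply: le_trans (lerD (full_bound (c0 := Ordinal hn) erefl) _) _.
  apply: le_trans (cover_bound (Q := fun c x => key a0 b0 c x) _ _) _.
  - move=> x /andP[_ /forallPn[w hw]].
    rewrite negb_imply in hw; case/andP: hw => hw1 hw2.
    case: (@arg_maxnP _ w (fun i : 'I_n => (a0 + b0 + 1 <= i)%N && (i \notin F x.1 x.2)) val).
      by rewrite hw1.
    move=> c /andP[hc1 hc2] hmax; exists c; rewrite /key hc1 hc2 /=.
    apply/forallP => w'; apply/implyP => hw'; apply/negPn/negP => hw'2.
    have := hmax w'; rewrite hw'2 andbT (leq_trans hc1 (ltnW hw')) => /(_ isT).
    by move=> /= hh; move: hw'; rewrite ltnNge hh.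
  - by move=> x _; apply: W_ge0.
  apply: le_trans (_ : \sum_(j : 'I_n) 16%:R * 2%:R ^+ (2 * n) * term a0.+1 b0.+1 j.+1 <= _).
    by apply: ler_sum => j _; apply: key_bound.
  by rewrite -mulr_sumr; apply: le_refl.
rewrite -/T.
apply: le_trans (lerD (ler_wpM2l _ (T0 (Ordinal hn))) (le_refl _)) _.
  by rewrite mulr_ge0.
rewrite -mulrDl ler_wpM2r //.
  by apply: (le_trans (term_ge0 a0.+1 b0.+1 (Ordinal hn).+1) (T0 _)).
by rewrite -mulrDl ler_wpM2r // -natrD ler_nat.
Qed.

Lemma W_le n x : @W n x <= 2%:R ^+ n.
Proof. by rewrite /W ler_eXn2l ?ltr1n // leq_subr. Qed.

Lemma total n :
  \sum_(x : {set 'I_n} * {set 'I_n}) W x <=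
  2%:R * 2%:R ^+ (2 * n) +
  32%:R * 2%:R ^+ (2 * n) * \sum_(a < n) \sum_(b < n) \sum_(c < n) term a.+1 b.+1 c.+1.
Proof.
rewrite (bigID (fun x : {set 'I_n} * {set 'I_n} => (x.1 == set0) || (x.2 == set0))) /=.
apply: lerD.
  apply: le_trans (sum_le_card (B := 2%:R ^+ n) (fun x _ => W_le x)) _.
  have -> : (2 * n = n + n)%N by lia.
  rewrite exprD mulrA ler_wpM2r ?exprn_ge0 //.
  rewrite -natr2X -natrM ler_nat.
  apply: leq_trans (_ : #|setX [set set0] (powerset [set: 'I_n]) :|:
                         setX (powerset [set: 'I_n]) [set set0]| <= _)%N.
    apply: subset_leq_card; apply/subsetP => -[A1 A3]; rewrite !inE /= !subsetT !andbT.
    by case/orP => ->; rewrite ?orbT.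
  rewrite cardsU !cardsX !cards1 card_powerset cardsT card_ord mul1n muln1 mul2n -addnn.
  exact: leq_subr.
apply: le_trans (cover_bound (J := ('I_n * 'I_n)%type) (Q := fun ab x => Xab ab.1 ab.2 x) _ _) _.
- move=> [A1 A3]; rewrite negb_or /= => /andP[/set0Pn[u uA] /set0Pn[v vA]].
  case: (@arg_minnP _ u (fun i : 'I_n => i \in A1) val uA) => a aA amin.
  case: (@arg_minnP _ v (fun i : 'I_n => i \in A3) val vA) => b bA bmin.
  exists (a, b); rewrite /Xab /= aA bA /=.
  by apply/andP; split; apply/forall_inP => w wA; [apply: amin | apply: bmin].
- by move=> x _; apply: W_ge0.
apply: le_trans (_ : \sum_(ab : 'I_n * 'I_n) \sum_(x | Xab ab.1 ab.2 x) W x <= _).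
  apply: ler_sum => ab _; apply: sum_sub => [x /andP[]//|x _]; exact: W_ge0.
apply: le_trans (_ : \sum_(ab : 'I_n * 'I_n) 32%:R * 2%:R ^+ (2 * n) *
                      \sum_(c0 : 'I_n) term ab.1.+1 ab.2.+1 c0.+1 <= _).
  by apply: ler_sum => ab _; apply: ab_bound.
rewrite -mulr_sumr -(pair_bigA _ (fun a b : 'I_n => \sum_(c < n) term a.+1 b.+1 c.+1)).
exact: le_refl.
Qed.

Theorem mainTheorem10 :
  exists C : int, forall n : nat, (0 < n)%N ->
    ((s n)%:R : rat) <=
      (2%:R : rat) ^ (2 * n%:Z + C) *
      \sum_(a < n) \sum_(b < n) \sum_(c < n) term a.+1 b.+1 c.+1.
Proof.
exists 6%:Z => n n0.
set T := \sum_(a < n) _.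
have T0 : 2%:R^-1 <= T.
  have t111 : term 1 1 1 = 2%:R^-1 by rewrite term_nonpos // expr1.
  rewrite /T (bigD1 (Ordinal n0)) //= (bigD1 (Ordinal n0)) //= (bigD1 (Ordinal n0)) //= t111.
  rewrite -!addrA lerDl; apply: addr_ge0.
    by apply: sumr_ge0 => i _; apply: term_ge0.
  apply: addr_ge0; apply: sumr_ge0 => i _; apply: sumr_ge0 => j _; try apply: sumr_ge0 => k _;
    apply: term_ge0.
have -> : (2 * n%:Z + 6)%R = (2 * n + 6)%N%:Z by rewrite PoszD PoszM.
rewrite -exprnP.
apply: le_trans (s_le n) _.
apply: le_trans (total n) _.
rewrite exprD (_ : (2%:R : rat) ^+ 6 = 64%:R); last by rewrite -natrX.
have K : 0 <= 2%:R ^+ (2 * n) :> rat by apply: exprn_ge0.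
have T0' : 0 <= T by apply: le_trans T0; rewrite invr_ge0.
have : 2%:R <= 4%:R * T :> rat.
  apply: le_trans (ler_wpM2l _ T0); first by [].
  by rewrite (_ : 4%:R = 2%:R * 2%:R :> rat) ?mulrA ?mulfK // -natrM.
move=> h2.
rewrite -/T.
have h3 := ler_wpM2l K h2.
have h4 := mulr_ge0 K T0'.
set P := 2%:R ^+ (2 * n) in K h3 h4 *.
nra.
Qed.
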